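(* If $X$ is a Hausdorff space with basepoint $e$, then the James reduced product $J(X)$, with the operation of word concatenation, is a pre-$\Delta$-monoid.
   Context: The James reduced product of a based space $(X,e)$ is $J(X)=\coprod_{n\in\mathbb{N}}X^n/\sim$ where $\sim$ is generated by $(x_1,\dots,x_{j-1},e,x_{j+1},\dots,x_n)\sim(x_1,\dots,x_{j-1},x_{j+1},\dots,x_n)$; elements are finite words in $X\setminus\{e\}$ (with $e$ the empty word), and word concatenation makes $J(X)$ the free monoid on $(X,e)$. Topology: $X^n$ has the product topology, $J_n(X)=q(X^n)$ (words of length $\leq n$) has the quotient topology from $q_n:X^n\to J_n(X)$, and $J(X)$ has the weak (inductive limit) topology with respect to $\{J_n(X)\}$: $C\subseteq J(X)$ is closed iff $C\cap J_n(X)$ is closed in $J_n(X)$ for all $n$. A pre-$\Delta$-monoid is a space $M$ with an associative operation $\ast$ with identity such that for any continuous paths $\alpha,\beta:[0,1]\to M$, the pointwise product $t\mapsto\alpha(t)\ast\beta(t)$ is continuous. *)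

(* Defs.v *)
From Stdlib Require Import Reals List Classical ClassicalEpsilon.
Open Scope R_scope.

Definition topology (X : Type) := (X -> Prop) -> Prop.

Definition is_topology {X : Type} (T : topology X) : Prop :=
  T (fun _ => True) /\
  (forall U V, T U -> T V -> T (fun x => U x /\ V x)) /\
  (forall (I : Type) (F : I -> X -> Prop),
      (forall i, T (F i)) -> T (fun x => exists i, F i x)).

Definition closed {X : Type} (T : topology X) (C : X -> Prop) : Prop :=
  T (fun x => ~ C x).

Definition continuous {X Y : Type} (TX : topology X) (TY : topology Y)
  (f : X -> Y) : Prop :=
  forall V, TY V -> TX (fun x => V (f x)).

Definition hausdorff {X : Type} (T : topology X) : Prop :=
  forall x y : X, x <> y ->
    exists U V, T U /\ T V /\ U x /\ V y /\ (forall z, ~ (U z /\ V z)).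

Definition R_topology : topology R :=
  fun U => forall x, U x -> exists eps, 0 < eps /\
             forall y, Rabs (y - x) < eps -> U y.

Definition I01 := {t : R | 0 <= t <= 1}.

Definition I01_topology : topology I01 :=
  fun V => exists U, R_topology U /\ forall t : I01, V t <-> U (proj1_sig t).

Definition tuple (n : nat) (X : Type) := {l : list X | length l = n}.

Definition in_box {X : Type} (Us : list (X -> Prop)) (l : list X) : Prop :=
  Forall2 (fun U x => U x) Us l.

Definition product_topology {X : Type} (T : topology X) (n : nat)
  : topology (tuple n X) :=
  fun W => forall l : tuple n X, W l ->
    exists Us : list (X -> Prop), Forall T Us /\ in_box Us (proj1_sig l) /\
      forall l' : tuple n X, in_box Us (proj1_sig l') -> W l'.

Definition quotient_topology {A B : Type} (TA : topology A) (q : A -> B)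
  : topology B :=
  fun V => TA (fun a => V (q a)).

Definition weak_topology {M : Type} (A : nat -> M -> Prop)
  (T : forall n, topology {m : M | A n m}) : topology M :=
  fun U => forall n, closed (T n) (fun m => ~ U (proj1_sig m)).

(** James reduced product: reduced words (no letter equal to e). *)
Definition J (X : Type) (e : X) := {l : list X | Forall (fun x => x <> e) l}.

Definition is_not_e {X : Type} (e x : X) : bool :=
  if excluded_middle_informative (x = e) then false else true.

Lemma reduce_ok {X : Type} (e : X) (l : list X) :
  Forall (fun x => x <> e) (filter (is_not_e e) l).
Proof.
  apply Forall_forall; intros x Hx; apply filter_In in Hx as [_ Hx].
  unfold is_not_e in Hx; destruct (excluded_middle_informative (x = e));
    [discriminate | assumption].
Qed.

Definition reduce {X : Type} (e : X) (l : list X) : J X e :=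
  exist _ (filter (is_not_e e) l) (reduce_ok e l).

Definition Jn_pred {X : Type} (e : X) (n : nat) (w : J X e) : Prop :=
  (length (proj1_sig w) <= n)%nat.

Definition Jn (X : Type) (e : X) (n : nat) := {w : J X e | Jn_pred e n w}.

Lemma qn_ok {X : Type} (e : X) (n : nat) (l : tuple n X) :
  Jn_pred e n (reduce e (proj1_sig l)).
Proof.
  unfold Jn_pred; simpl; destruct l as [l Hl]; simpl; rewrite <- Hl; clear Hl.
  induction l as [|a l IH]; simpl; [auto|].
  destruct (is_not_e e a); simpl; [apply le_n_S|apply le_S]; exact IH.
Qed.

Definition qn {X : Type} (e : X) (n : nat) (l : tuple n X) : Jn X e n :=
  exist _ (reduce e (proj1_sig l)) (qn_ok e n l).

Definition Jn_topology {X : Type} (T : topology X) (e : X) (n : nat)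
  : topology (Jn X e n) :=
  quotient_topology (product_topology T n) (qn e n).

Definition J_topology {X : Type} (T : topology X) (e : X) : topology (J X e) :=
  weak_topology (Jn_pred e) (Jn_topology T e).

Definition J_concat {X : Type} (e : X) (u v : J X e) : J X e :=
  exist _ (proj1_sig u ++ proj1_sig v)
    (proj2 (Forall_app _ _ _) (conj (proj2_sig u) (proj2_sig v))).

Definition J_empty {X : Type} (e : X) : J X e := exist _ nil (Forall_nil _).

Definition pre_Delta_monoid {M : Type} (T : topology M)
  (op : M -> M -> M) (one : M) : Prop :=
  is_topology T /\
  (forall a b c, op (op a b) c = op a (op b c)) /\
  (forall a, op one a = a /\ op a one = a) /\
  (forall alpha beta : I01 -> M,
      continuous I01_topology T alpha -> continuous I01_topology T beta ->
      continuous I01_topology T (fun t => op (alpha t) (beta t))).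

(* Main.v *)
Require Import Defs.
From Stdlib Require Import Reals List Lra Lia Classical ClassicalEpsilon ProofIrrelevance FunctionalExtensionality PropExtensionality.
Open Scope R_scope.

Lemma set_ext {A : Type} (P Q : A -> Prop) : (forall a, P a <-> Q a) -> P = Q.
Proof. intros H; apply functional_extensionality; intros a; apply propositional_extensionality; auto. Qed.

Definition PT {X : Type} (T : topology X) (k : nat) (W : list X -> Prop) : Prop :=
  forall l, length l = k -> W l ->
    exists Us, Forall T Us /\ in_box Us l /\ forall l', in_box Us l' -> W l'.

Lemma in_box_length {X} (Us : list (X -> Prop)) l : in_box Us l -> length l = length Us.
Proof. intros H; symmetry; exact (Forall2_length H). Qed.

Lemma PT_ext {X} (T : topology X) k (P Q : list X -> Prop) :
  (forall l, length l = k -> (P l <-> Q l)) -> PT T k P -> PT T k Q.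
Proof.
  intros Hpq HP l Hl Ql. destruct (HP l Hl (proj2 (Hpq l Hl) Ql)) as (Us & H1 & H2 & H3).
  exists Us; split; [auto|split; [auto|]]. intros l' Hb.
  apply Hpq; [|auto]. rewrite (in_box_length _ _ Hb), <- (in_box_length _ _ H2); auto.
Qed.

Lemma product_PT {X} (T : topology X) n (W : list X -> Prop) :
  product_topology T n (fun t => W (proj1_sig t)) <-> PT T n W.
Proof.
  split.
  - intros H l Hl Wl. destruct (H (exist _ l Hl) Wl) as (Us & H1 & H2 & H3).
    exists Us; split; [auto|split; [auto|]]. intros l' Hb.
    assert (Hl' : length l' = n) by (rewrite (in_box_length _ _ Hb), <- (in_box_length _ _ H2); auto).
    exact (H3 (exist _ l' Hl') Hb).
  - intros H [l Hl] Wl. simpl in *. destruct (H l Hl Wl) as (Us & H1 & H2 & H3).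
    exists Us; split; [auto|split; [auto|]]. intros [l' Hl'] Hb; simpl in *; auto.
Qed.

Lemma J_open_iff {X} (T : topology X) e (U : J X e -> Prop) :
  J_topology T e U <-> forall n, PT T n (fun l => U (reduce e l)).
Proof.
  unfold J_topology, weak_topology, closed, Jn_topology, quotient_topology. split.
  - intros H n. specialize (H n). simpl in H.
    apply (product_PT T n (fun l => ~ ~ U (reduce e l))) in H.
    revert H; apply PT_ext. intros l _; split; [apply NNPP | auto].
  - intros H n. specialize (H n). simpl. apply (proj2 (product_PT T n (fun l => ~ ~ U (reduce e l)))).
    revert H; apply PT_ext. intros l _; split; [auto | apply NNPP].
Qed.

Lemma loc_of_open (V : I01 -> Prop) t : I01_topology V -> V t ->
  exists eps, 0 < eps /\ forall t', Rabs (proj1_sig t' - proj1_sig t) < eps -> V t'.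
Proof.
  intros (U & HU & Heq) Vt. destruct (HU (proj1_sig t) (proj1 (Heq t) Vt)) as (eps & He & Hb).
  exists eps; split; auto. intros t' H'. apply Heq, Hb; auto.
Qed.

Lemma open_of_loc (V : I01 -> Prop) :
  (forall t, V t -> exists eps, 0 < eps /\ forall t', Rabs (proj1_sig t' - proj1_sig t) < eps -> V t') ->
  I01_topology V.
Proof.
  intros H. exists (fun s => exists eps, 0 < eps /\ forall t' : I01, Rabs (proj1_sig t' - s) < eps -> V t').
  split.
  - intros s (eps & He & Hb). exists (eps/2); split; [lra|]. intros y Hy.
    exists (eps/2); split; [lra|]. intros t' Ht'. apply Hb.
    replace (proj1_sig t' - s) with ((proj1_sig t' - y) + (y - s)) by ring.
    eapply Rle_lt_trans; [apply Rabs_triang|]. lra.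
  - intros t; split.
    + intros Vt; apply H; auto.
    + intros (eps & He & Hb). apply Hb. rewrite Rminus_diag, Rabs_R0; auto.
Qed.

Lemma cont_loc {X} (T : topology X) e (alpha : I01 -> J X e) (G : J X e -> Prop) t :
  continuous I01_topology (J_topology T e) alpha -> J_topology T e G -> G (alpha t) ->
  exists eps, 0 < eps /\ forall t', Rabs (proj1_sig t' - proj1_sig t) < eps -> G (alpha t').
Proof. intros Hc HG Ht. apply (loc_of_open (fun t => G (alpha t))); auto. Qed.

Lemma J_eq {X} e (u v : J X e) : proj1_sig u = proj1_sig v -> u = v.
Proof. destruct u, v; simpl; intros ->; f_equal; apply proof_irrelevance. Qed.

Fixpoint gather {A : Type} (M : list bool) (l : list A) : list A :=
  match M, l with
  | b :: M', x :: l' => if b then x :: gather M' l' else gather M' l'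
  | _, _ => nil
  end.

Fixpoint scatter {A : Type} (e : A) (M : list bool) (l : list A) : list A :=
  match M with
  | nil => nil
  | true :: M' => match l with nil => e :: scatter e M' nil | z :: l' => z :: scatter e M' l' end
  | false :: M' => e :: scatter e M' l
  end.

Fixpoint cnt (M : list bool) : nat :=
  match M with nil => 0%nat | b :: M' => if b then S (cnt M') else cnt M' end.

Fixpoint masks (k : nat) : list (list bool) :=
  match k with 0%nat => nil :: nil | S k => map (cons true) (masks k) ++ map (cons false) (masks k) end.

Lemma masks_in k M : length M = k -> In M (masks k).
Proof.
  revert M; induction k; intros [|b M] H; simpl in *; try discriminate; auto.
  apply in_or_app. destruct b; [left|right]; apply in_map; auto.
Qed.

Lemma masks_len k M : In M (masks k) -> length M = k.
Proof.
  revert M; induction k; intros M H; simpl in *.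
  - destruct H as [<-|[]]; auto.
  - apply in_app_or in H; destruct H as [H|H]; apply in_map_iff in H; destruct H as (M' & <- & H); simpl; f_equal; auto.
Qed.

Lemma is_not_e_e {X} (e : X) : is_not_e e e = false.
Proof. unfold is_not_e; destruct (excluded_middle_informative (e = e)); congruence. Qed.

Lemma is_not_e_false {X} (e a : X) : is_not_e e a = false -> a = e.
Proof. unfold is_not_e; destruct (excluded_middle_informative (a = e)); congruence. Qed.

Lemma is_not_e_true {X} (e a : X) : is_not_e e a = true -> a <> e.
Proof. unfold is_not_e; destruct (excluded_middle_informative (a = e)); congruence. Qed.

Lemma gather_map {A} (f : A -> bool) y : gather (map f y) y = filter f y.
Proof. induction y; simpl; auto. destruct (f a); simpl; congruence. Qed.

Lemma scatter_filter {X} (e : X) (f : X -> bool) x :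
  (forall a, f a = false -> a = e) -> scatter e (map f x) (filter f x) = x.
Proof.
  intros Hf; induction x; simpl; auto. destruct (f a) eqn:E; simpl.
  - congruence.
  - rewrite (Hf a E); congruence.
Qed.

Lemma length_scatter {A} (e : A) M l : length (scatter e M l) = length M.
Proof. revert l; induction M as [|[|] M IH]; intros [|z l]; simpl; auto. Qed.

Lemma filter_scatter {A} (e : A) (f : A -> bool) M l :
  f e = false -> length l = cnt M -> filter f (scatter e M l) = filter f l.
Proof.
  intros He; revert l; induction M as [|[|] M IH]; intros [|z l] Hl; simpl in *; try lia; auto.
  - destruct (f z); [f_equal|]; apply IH; lia.
  - rewrite He; apply IH; auto.
  - rewrite He; apply IH; simpl; lia.
Qed.

Lemma length_gather {A} M (l : list A) : length M = length l -> length (gather M l) = cnt M.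
Proof. revert l; induction M as [|[|] M IH]; intros [|z l] H; simpl in *; try lia; auto. Qed.

Definition okmask {X} (e : X) (M : list bool) (y : list X) := Forall2 (fun b z => b = false -> z = e) M y.

Lemma gather_filter {X} (e : X) (f : X -> bool) M y :
  okmask e M y -> f e = false -> filter f (gather M y) = filter f y.
Proof.
  intros H He; induction H as [|b z M y Hb H IH]; simpl; auto.
  destruct b; simpl.
  - destruct (f z); congruence.
  - rewrite (Hb eq_refl), He; auto.
Qed.

Lemma cnt_map {A} (f : A -> bool) x : cnt (map f x) = length (filter f x).
Proof. induction x; simpl; auto. destruct (f a); simpl; auto. Qed.

Lemma okmask_map {X} (e : X) (f : X -> bool) y :
  (forall a, f a = false -> a = e) -> okmask e (map f y) y.
Proof. intros Hf; induction y; simpl; constructor; auto. Qed.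

Lemma in_box_cons_inv {X} (Vs : list (X -> Prop)) z l :
  in_box Vs (z :: l) -> exists V Vs', Vs = V :: Vs' /\ V z /\ in_box Vs' l.
Proof. intros H; inversion H; subst; eauto. Qed.

Definition full {X} : X -> Prop := fun _ => True.

Lemma T_full {X} (T : topology X) : is_topology T -> T full.
Proof. intros [H _]; exact H. Qed.

Definition boxcont {X} (T : topology X) (k : nat) (g : list X -> list X) :=
  forall y Vs, length y = k -> Forall T Vs -> in_box Vs (g y) ->
    exists Us, Forall T Us /\ in_box Us y /\ forall y', in_box Us y' -> in_box Vs (g y').

Lemma PT_comp {X} (T : topology X) k k' g W :
  (forall y, length y = k -> length (g y) = k') -> boxcont T k g -> PT T k' W -> PT T k (fun y => W (g y)).
Proof.
  intros Hl Hb HW y Hy Wy. destruct (HW (g y) (Hl y Hy) Wy) as (Vs & H1 & H2 & H3).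
  destruct (Hb y Vs Hy H1 H2) as (Us & G1 & G2 & G3). exists Us; auto.
Qed.

Lemma boxcont_gather {X} (T : topology X) M : is_topology T -> boxcont T (length M) (gather M).
Proof.
  intros HT. induction M as [|b M IH]; intros y Vs Hy HV Hb.
  - destruct y; [|discriminate]. exists nil; split; [constructor|split; [constructor|]].
    intros y' Hy'. inversion Hy'. simpl. inversion Hb; constructor.
  - destruct y as [|z y]; [discriminate|]. simpl in Hy. injection Hy as Hy.
    destruct b; simpl in Hb.
    + destruct (in_box_cons_inv _ _ _ Hb) as (V & Vs' & -> & HVz & Hb').
      destruct (IH y Vs' Hy (Forall_inv_tail HV) Hb') as (Us & G1 & G2 & G3).
      exists (V :: Us); split; [constructor; auto; exact (Forall_inv HV)|split; [constructor; auto|]].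
      intros y' Hy'. inversion Hy'; subst. simpl. constructor; [auto|apply G3; auto].
    + destruct (IH y Vs Hy HV Hb) as (Us & G1 & G2 & G3).
      exists (full :: Us); split; [constructor; auto; apply T_full; auto|split; [constructor; [exact I|auto]|]].
      intros y' Hy'. inversion Hy'; subst. simpl. auto.
Qed.

Lemma boxcont_scatter {X} (T : topology X) e M : is_topology T -> boxcont T (cnt M) (scatter e M).
Proof.
  intros HT. induction M as [|b M IH]; intros y Vs Hy HV Hb.
  - exists (map (fun _ => full) y); split.
    + apply Forall_forall; intros U HU; apply in_map_iff in HU; destruct HU as (? & <- & _); apply T_full; auto.
    + split.
      * clear; induction y; simpl; constructor; auto; exact I.
      * intros y' _. simpl in *. inversion Hb; constructor.
  - destruct b; simpl in Hb, Hy.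
    + destruct y as [|z y]; [discriminate|]. simpl in Hy. injection Hy as Hy.
      destruct (in_box_cons_inv _ _ _ Hb) as (V & Vs' & -> & HVz & Hb').
      destruct (IH y Vs' Hy (Forall_inv_tail HV) Hb') as (Us & G1 & G2 & G3).
      exists (V :: Us); split; [constructor; auto; exact (Forall_inv HV)|split; [constructor; auto|]].
      intros y' Hy'. inversion Hy'; subst. simpl. constructor; [auto|apply G3; auto].
    + destruct (in_box_cons_inv _ _ _ Hb) as (V & Vs' & -> & HVz & Hb').
      destruct (IH y Vs' Hy (Forall_inv_tail HV) Hb') as (Us & G1 & G2 & G3).
      exists Us; split; [auto|split; [auto|]].
      intros y' Hy'. simpl. constructor; [auto|apply G3; auto].
Qed.

Lemma T_neq {X} (T : topology X) a : is_topology T -> hausdorff T -> T (fun z => z <> a).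
Proof.
  intros (_ & _ & HU) HH.
  assert (Heq : (fun z => exists i : {U : X -> Prop | T U /\ ~ U a}, proj1_sig i z) = (fun z => z <> a)).
  { apply set_ext; intros z; split.
    - intros ([U [HT HUa]] & Hz) E; simpl in *; rewrite E in Hz; auto.
    - intros Hz. destruct (HH z a Hz) as (U & V & H1 & H2 & H3 & H4 & H5).
      assert (HUa : ~ U a) by (intros HUa; apply (H5 a); auto).
      exists (exist _ U (conj H1 HUa)); simpl; auto. }
  rewrite <- Heq. apply HU. intros [U [HT0 HUa]]; simpl; auto.
Qed.

Lemma box_inter {X} (T : topology X) (HT : is_topology T) Us1 Us2 l :
  Forall T Us1 -> Forall T Us2 -> in_box Us1 l -> in_box Us2 l ->
  exists Us, Forall T Us /\ in_box Us l /\ forall l', in_box Us l' -> in_box Us1 l' /\ in_box Us2 l'.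
Proof.
  revert Us1 Us2; induction l as [|z l IH]; intros Us1 Us2 F1 F2 B1 B2.
  - inversion B1; inversion B2; subst. exists nil; split; [constructor|split; [constructor|]].
    intros l' H; inversion H; split; constructor.
  - destruct (in_box_cons_inv _ _ _ B1) as (V1 & Vs1 & -> & HV1 & B1').
    destruct (in_box_cons_inv _ _ _ B2) as (V2 & Vs2 & -> & HV2 & B2').
    destruct (IH Vs1 Vs2 (Forall_inv_tail F1) (Forall_inv_tail F2) B1' B2') as (Us & G1 & G2 & G3).
    exists ((fun x => V1 x /\ V2 x) :: Us); split; [|split].
    + constructor; auto. destruct HT as (_ & Hi & _). apply Hi; [exact (Forall_inv F1)|exact (Forall_inv F2)].
    + constructor; auto.
    + intros l' H. inversion H; subst. destruct H2. destruct (G3 _ H4). split; constructor; auto.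
Qed.

Lemma PT_and {X} (T : topology X) (HT : is_topology T) k P Q :
  PT T k P -> PT T k Q -> PT T k (fun l => P l /\ Q l).
Proof.
  intros HP HQ l Hl [Pl Ql]. destruct (HP l Hl Pl) as (Us1 & A1 & A2 & A3). destruct (HQ l Hl Ql) as (Us2 & B1 & B2 & B3).
  destruct (box_inter T HT Us1 Us2 l A1 B1 A2 B2) as (Us & G1 & G2 & G3).
  exists Us; split; [auto|split; [auto|]]. intros l' H; destruct (G3 l' H); split; auto.
Qed.

Lemma PT_or {X} (T : topology X) k P Q :
  PT T k P -> PT T k Q -> PT T k (fun l => P l \/ Q l).
Proof.
  intros HP HQ l Hl [Pl|Ql].
  - destruct (HP l Hl Pl) as (Us & A1 & A2 & A3); exists Us; split; [auto|split; [auto|]]; intros; left; auto.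
  - destruct (HQ l Hl Ql) as (Us & A1 & A2 & A3); exists Us; split; [auto|split; [auto|]]; intros; right; auto.
Qed.

Lemma PT_full {X} (T : topology X) (HT : is_topology T) k : PT T k (fun _ => True).
Proof.
  intros l _ _. exists (map (fun _ => full) l); split; [|split].
  - apply Forall_forall; intros U HU; apply in_map_iff in HU; destruct HU as (? & <- & _); apply T_full; auto.
  - clear; induction l; simpl; constructor; auto; exact I.
  - auto.
Qed.

Lemma PT_forall_list {X A} (T : topology X) (HT : is_topology T) k (L : list A) (P : A -> list X -> Prop) :
  (forall a, In a L -> PT T k (P a)) -> PT T k (fun y => forall a, In a L -> P a y).
Proof.
  induction L as [|a L IH]; intros H.
  - eapply PT_ext; [|apply (PT_full T HT k)]. intros l _; simpl; split; [intros _ a []|auto].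
  - eapply PT_ext; [|apply (PT_and T HT k _ _ (H a (or_introl eq_refl)) (IH (fun b Hb => H b (or_intror Hb))))].
    intros l _; simpl; split.
    + intros [H1 H2] b [<-|Hb]; auto.
    + intros H'; split; auto.
Qed.

Lemma PT_notok {X} (T : topology X) (HT : is_topology T) (HH : hausdorff T) e M :
  PT T (length M) (fun y => ~ okmask e M y).
Proof.
  intros y Hy Hn. revert y Hy Hn. induction M as [|b M IH]; intros y Hy Hn.
  - destruct y; [|discriminate]. exfalso; apply Hn; constructor.
  - destruct y as [|z y]; [discriminate|]. simpl in Hy; injection Hy as Hy.
    destruct (classic (okmask e M y)) as [Hok|Hnok].
    + destruct b.
      * exfalso; apply Hn; constructor; auto; discriminate.
      * assert (Hz : z <> e) by (intros ->; apply Hn; constructor; auto).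
        exists ((fun x => x <> e) :: map (fun _ => full) y); split; [|split].
        -- constructor; [apply T_neq; auto|]. apply Forall_forall; intros U HU; apply in_map_iff in HU; destruct HU as (? & <- & _); apply T_full; auto.
        -- constructor; auto. clear; induction y; simpl; constructor; auto; exact I.
        -- intros l' Hl'. inversion Hl'; subst. intros Hok'. inversion Hok'; subst. apply H1; auto.
    + destruct (IH y Hy Hnok) as (Us & G1 & G2 & G3).
      exists (full :: Us); split; [constructor; auto; apply T_full; auto|split; [constructor; [exact I|auto]|]].
      intros l' Hl'. inversion Hl'; subst. intros Hok'. inversion Hok'; subst. apply (G3 l'0); auto.
Qed.

Definition Omega {X} (e : X) (n : nat) (O : list X -> Prop) (w : J X e) : Prop :=
  forall x', length x' = n -> filter (is_not_e e) x' = proj1_sig w -> O x'.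

Lemma closed_image {X} (T : topology X) (HT : is_topology T) (HH : hausdorff T) e n O :
  PT T n O -> J_topology T e (Omega e n O).
Proof.
  intros HO. apply J_open_iff. intros k.
  set (G := fun A B (y : list X) => ~ okmask e A y \/ (cnt A = cnt B -> O (scatter e B (gather A y)))).
  apply (PT_ext T k (fun y => forall A, In A (masks k) -> forall B, In B (masks n) -> G A B y)).
  - intros y Hy. unfold Omega, G; simpl. split.
    + intros H x' Hx' Hf.
      set (A := map (is_not_e e) y). set (B := map (is_not_e e) x').
      assert (HA : In A (masks k)) by (apply masks_in; unfold A; rewrite length_map; auto).
      assert (HB : In B (masks n)) by (apply masks_in; unfold B; rewrite length_map; auto).
      destruct (H A HA B HB) as [Hn|Hc].
      * exfalso; apply Hn. apply okmask_map, is_not_e_false.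
      * unfold A, B in Hc. rewrite gather_map, <- Hf in Hc.
        rewrite scatter_filter in Hc; [|apply is_not_e_false].
        apply Hc. rewrite !cnt_map. rewrite Hf; auto.
    + intros H A HA B HB. destruct (classic (okmask e A y)) as [Hok|Hn]; [right|left; auto].
      intros Hc. apply H.
      * rewrite length_scatter; apply masks_len; auto.
      * rewrite (filter_scatter e); [|apply is_not_e_e|].
        -- apply (gather_filter e); auto; apply is_not_e_e.
        -- rewrite length_gather; auto. rewrite (masks_len _ _ HA); auto.
  - apply PT_forall_list; auto. intros A HA. apply PT_forall_list; auto. intros B HB.
    unfold G. apply PT_or.
    + rewrite <- (masks_len _ _ HA). apply PT_notok; auto.
    + destruct (Nat.eq_dec (cnt A) (cnt B)) as [Heq|Hne].
      * eapply PT_ext; [|apply (PT_comp T k (cnt B) (gather A) (fun l => O (scatter e B l)))].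
        -- intros y _; simpl; split; auto.
        -- intros y Hy. rewrite length_gather; auto. rewrite (masks_len _ _ HA); auto.
        -- rewrite <- (masks_len _ _ HA). apply boxcont_gather; auto.
        -- apply (PT_comp T (cnt B) n (scatter e B) O).
           ++ intros y _. rewrite length_scatter; apply masks_len; auto.
           ++ apply boxcont_scatter; auto.
           ++ auto.
      * eapply PT_ext; [|apply (PT_full T HT k)]. intros y _; split; [intros _ Hc; contradiction|auto].
Qed.

Lemma PT_box {X} (T : topology X) k Us : Forall T Us -> PT T k (in_box Us).
Proof. intros HF l _ Hl. exists Us; auto. Qed.

Lemma PT_false {X} (T : topology X) k : PT T k (fun _ => False).
Proof. intros l _ []. Qed.

Lemma rect {X} (T : topology X) n m W x y :
  PT T (n + m) W -> length x = n -> length y = m -> W (x ++ y) ->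
  exists O1 O2, PT T n O1 /\ PT T m O2 /\ O1 x /\ O2 y /\
    forall x' y', O1 x' -> O2 y' -> W (x' ++ y').
Proof.
  intros HW Hx Hy Wxy. destruct (HW (x ++ y)) as (Us & H1 & H2 & H3); [rewrite length_app; lia|auto|].
  destruct (Forall2_app_inv_r _ _ H2) as (Us1 & Us2 & B1 & B2 & ->).
  apply Forall_app in H1; destruct H1 as [F1 F2].
  exists (in_box Us1), (in_box Us2); split; [apply PT_box; auto|split; [apply PT_box; auto|]].
  split; [auto|split; [auto|]]. intros x' y' G1 G2. apply H3. apply Forall2_app; auto.
Qed.

Lemma tube1 {X} (T : topology X) (HT : is_topology T) n m W x (Lv : list (list X)) (Pv : list X -> Prop) :
  PT T (n + m) W -> length x = n ->
  (forall y, In y Lv -> Pv y -> length y = m /\ W (x ++ y)) ->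
  exists O1 O2, PT T n O1 /\ PT T m O2 /\ O1 x /\ (forall y, In y Lv -> Pv y -> O2 y) /\
    forall x' y', O1 x' -> O2 y' -> W (x' ++ y').
Proof.
  intros HW Hx. induction Lv as [|y Lv IH]; intros H.
  - exists (fun _ => True), (fun _ => False). split; [apply PT_full; auto|split; [apply PT_false|]].
    split; [auto|split; [intros _ []|]]. intros _ _ _ [].
  - destruct IH as (O1 & O2 & A1 & A2 & A3 & A4 & A5); [intros; apply H; simpl; auto|].
    destruct (classic (Pv y)) as [Py|Py].
    + destruct (H y (or_introl eq_refl) Py) as [Hy Wy].
      destruct (rect T n m W x y HW Hx Hy Wy) as (P & Q & B1 & B2 & B3 & B4 & B5).
      exists (fun z => P z /\ O1 z), (fun z => Q z \/ O2 z).
      split; [apply PT_and; auto|split; [apply PT_or; auto|]].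
      split; [auto|split].
      * intros y' [<-|Hy'] Py'; [left|right]; auto.
      * intros x' y' [G1 G2] [G3|G3]; auto.
    + exists O1, O2. split; [auto|split; [auto|split; [auto|split]]]; auto.
      intros y' [<-|Hy'] Py'; [contradiction|auto].
Qed.

Lemma tube2 {X} (T : topology X) (HT : is_topology T) n m W (Lu Lv : list (list X)) (Pu Pv : list X -> Prop) :
  PT T (n + m) W ->
  (forall x, In x Lu -> Pu x -> length x = n) ->
  (forall x y, In x Lu -> Pu x -> In y Lv -> Pv y -> length y = m /\ W (x ++ y)) ->
  exists O1 O2, PT T n O1 /\ PT T m O2 /\ (forall x, In x Lu -> Pu x -> O1 x) /\
    (forall y, In y Lv -> Pv y -> O2 y) /\
    forall x' y', O1 x' -> O2 y' -> W (x' ++ y').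
Proof.
  intros HW. induction Lu as [|x Lu IH]; intros Hl H.
  - exists (fun _ => False), (fun _ => True). split; [apply PT_false|split; [apply PT_full; auto|]].
    split; [intros _ []|split; [auto|]]. intros _ _ [] _.
  - destruct IH as (O1 & O2 & A1 & A2 & A3 & A4 & A5); [intros; apply Hl; simpl; auto|intros; apply H; simpl; auto|].
    destruct (classic (Pu x)) as [Px|Px].
    + destruct (tube1 T HT n m W x Lv Pv HW (Hl x (or_introl eq_refl) Px) (fun y Hy Py => H x y (or_introl eq_refl) Px Hy Py))
        as (P & Q & B1 & B2 & B3 & B4 & B5).
      exists (fun z => P z \/ O1 z), (fun z => Q z /\ O2 z).
      split; [apply PT_or; auto|split; [apply PT_and; auto|]].
      split; [|split].
      * intros x' [<-|Hx'] Px'; [left|right]; auto.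
      * intros y' Hy' Py'; split; auto.
      * intros x' y' [G1|G1] [G3 G4]; auto.
    + exists O1, O2. split; [auto|split; [auto|split; [|split]]]; auto.
      intros x' [<-|Hx'] Px'; [contradiction|auto].
Qed.

Definition lifts {X} (e : X) (n : nat) (u : list X) : list (list X) :=
  map (fun B => scatter e B u) (masks n).

Lemma lifts_in {X} (e : X) n u x :
  length x = n -> filter (is_not_e e) x = u -> In x (lifts e n u).
Proof.
  intros Hx Hf. unfold lifts. apply in_map_iff. exists (map (is_not_e e) x). split.
  - rewrite <- Hf. apply scatter_filter, is_not_e_false.
  - apply masks_in; rewrite length_map; auto.
Qed.

Lemma filter_reduced {X} (e : X) l : Forall (fun x => x <> e) l -> filter (is_not_e e) l = l.
Proof.
  intros H; induction H; simpl; auto. unfold is_not_e at 1.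
  destruct (excluded_middle_informative (x = e)); [contradiction|f_equal; auto].
Qed.

Lemma PT_neq_list {X} (T : topology X) (HT : is_topology T) (HH : hausdorff T) l0 :
  PT T (length l0) (fun x => x <> l0).
Proof.
  induction l0 as [|a l0 IH]; intros x Hx Hne.
  - destruct x; [contradiction|discriminate].
  - destruct x as [|z x]; [discriminate|]. simpl in Hx; injection Hx as Hx.
    destruct (classic (z = a)) as [->|Hza].
    + assert (Hne' : x <> l0) by congruence.
      destruct (IH x Hx Hne') as (Us & G1 & G2 & G3).
      exists (full :: Us); split; [constructor; auto; apply T_full; auto|split; [constructor; [exact I|auto]|]].
      intros l' Hl'. inversion Hl'; subst. intros E; injection E as _ E. apply (G3 l'0); auto.
    + exists ((fun y => y <> a) :: map (fun _ => full) x); split; [|split].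
      * constructor; [apply T_neq; auto|]. apply Forall_forall; intros U HU; apply in_map_iff in HU; destruct HU as (? & <- & _); apply T_full; auto.
      * constructor; auto. clear; induction x; simpl; constructor; auto; exact I.
      * intros l' Hl'. inversion Hl'; subst. intros E; injection E as E _. auto.
Qed.

Lemma J_point_open {X} (T : topology X) (HT : is_topology T) (HH : hausdorff T) e (w0 : J X e) :
  J_topology T e (fun w => w <> w0).
Proof.
  assert (Heq : Omega e (length (proj1_sig w0)) (fun x => x <> proj1_sig w0) = (fun w => w <> w0)).
  { apply set_ext; intros w; unfold Omega; split.
    - intros H ->. apply (H (proj1_sig w0)); auto. apply filter_reduced, proj2_sig.
    - intros Hw x' _ Hf ->. apply Hw, J_eq. rewrite <- Hf. apply filter_reduced, proj2_sig. }
  rewrite <- Heq. apply closed_image; auto. apply PT_neq_list; auto.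
Qed.

Lemma bounded_path {X} (T : topology X) (HT : is_topology T) (HH : hausdorff T) e (alpha : I01 -> J X e) :
  continuous I01_topology (J_topology T e) alpha ->
  exists N, forall t, (length (proj1_sig (alpha t)) <= N)%nat.
Proof.
  intros Hc. apply NNPP; intros Hnb.
  assert (Hs : forall j, exists t, (j < length (proj1_sig (alpha t)))%nat).
  { intros j. apply NNPP; intros Hn. apply Hnb. exists j. intros t. apply Nat.nlt_ge. intros Hl; apply Hn; eauto. }
  set (s := fun j => proj1_sig (constructive_indefinite_description _ (Hs j))).
  assert (Hsp : forall j, (j < length (proj1_sig (alpha (s j))))%nat).
  { intros j; unfold s; destruct (constructive_indefinite_description _ (Hs j)); auto. }
  set (un := fun j => proj1_sig (s j)).
  destruct (Bolzano_Weierstrass un (fun c => 0 <= c <= 1) (compact_P3 0 1)) as [l Hl].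
  { intros j; unfold un; apply proj2_sig. }
  assert (Hl01 : 0 <= l <= 1).
  { split; apply Rnot_lt_le; intros Hlt.
    - destruct (Hl (fun r => Rabs (r - l) < - l) 0%nat) as (p & _ & Hp).
      + exists (mkposreal (- l) ltac:(lra)); intros r Hr; exact Hr.
      + destruct (proj2_sig (s p)). unfold un in Hp. apply Rabs_def2 in Hp. lra.
    - destruct (Hl (fun r => Rabs (r - l) < l - 1) 0%nat) as (p & _ & Hp).
      + exists (mkposreal (l - 1) ltac:(lra)); intros r Hr; exact Hr.
      + destruct (proj2_sig (s p)). unfold un in Hp. apply Rabs_def2 in Hp. lra. }
  set (ts := exist (fun t => 0 <= t <= 1) l Hl01 : I01).
  set (L := length (proj1_sig (alpha ts))).
  set (Sset := fun w => exists j, (L < j)%nat /\ w = alpha (s j)).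
  assert (HS : J_topology T e (fun w => ~ Sset w)).
  { apply J_open_iff. intros k.
    apply (PT_ext T k (fun y => forall j, In j (seq 0 (S k)) -> (L < j)%nat -> reduce e y <> alpha (s j))).
    - intros y Hy; split.
      + intros H (j & Hj & Heq). destruct (Nat.lt_ge_cases j (S k)) as [Hjk|Hjk].
        * apply (H j); auto. apply in_seq; lia.
        * specialize (Hsp j). rewrite <- Heq in Hsp. simpl in Hsp.
          pose proof (filter_length_le (is_not_e e) y). lia.
      + intros H j _ Hj Heq. apply H; exists j; auto.
    - apply PT_forall_list; auto. intros j _.
      destruct (Nat.lt_ge_cases L j) as [Hj|Hj].
      + eapply PT_ext; [|apply (proj1 (J_open_iff T e (fun w => w <> alpha (s j)))); apply J_point_open; auto]. intros y _; simpl; split; auto.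
      + eapply PT_ext; [|apply (PT_full T HT k)]. intros y _; split; [intros _ H; lia|auto]. }
  destruct (cont_loc T e alpha _ ts Hc HS) as (eps & He & Hb).
  { intros (j & Hj & Heq). specialize (Hsp j). rewrite <- Heq in Hsp. unfold L in Hj. lia. }
  destruct (Hl (fun r => Rabs (r - l) < eps) (S L)) as (p & Hp & Hp2).
  - exists (mkposreal eps He); intros r Hr; exact Hr.
  - apply (Hb (s p)); [exact Hp2|]. exists p; split; auto.
Qed.

Lemma filter_repeat_e {X} (e : X) k : filter (is_not_e e) (repeat e k) = nil.
Proof. induction k; simpl; auto. rewrite is_not_e_e; auto. Qed.

Lemma pad_lift {X} (e : X) (w : J X e) n : (length (proj1_sig w) <= n)%nat ->
  length (proj1_sig w ++ repeat e (n - length (proj1_sig w))) = n /\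
  filter (is_not_e e) (proj1_sig w ++ repeat e (n - length (proj1_sig w))) = proj1_sig w.
Proof.
  intros H; split.
  - rewrite length_app, repeat_length; lia.
  - rewrite filter_app, filter_repeat_e, app_nil_r. apply filter_reduced, proj2_sig.
Qed.

Lemma J_is_topology {X} (T : topology X) (HT : is_topology T) e : is_topology (J_topology T e).
Proof.
  split; [|split].
  - apply J_open_iff; intros n. apply PT_full; auto.
  - intros U V HU HV. apply J_open_iff; intros n.
    apply (PT_and T HT n (fun l => U (reduce e l)) (fun l => V (reduce e l))); apply J_open_iff; auto.
  - intros I F HF. apply J_open_iff; intros n l Hl (i & Hi).
    destruct (proj1 (J_open_iff T e (F i)) (HF i) n l Hl Hi) as (Us & G1 & G2 & G3).
    exists Us; split; [auto|split; [auto|]]. intros l' H'; exists i; auto.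
Qed.

Theorem mainTheorem15 (X : Type) (T : topology X) (e : X) :
  is_topology T -> hausdorff T ->
  pre_Delta_monoid (J_topology T e) (J_concat e) (J_empty e).
Proof.
  intros HT HH. split; [apply J_is_topology; auto|split; [|split]].
  - intros a b c; apply J_eq; simpl; symmetry; apply app_assoc.
  - intros a; split; apply J_eq; simpl; auto; apply app_nil_r.
  - intros alpha beta Ha Hb V HV. apply open_of_loc. intros t0 Vt0.
    destruct (bounded_path T HT HH e alpha Ha) as [N1 HN1].
    destruct (bounded_path T HT HH e beta Hb) as [N2 HN2].
    set (u := proj1_sig (alpha t0)). set (v := proj1_sig (beta t0)).
    set (W := fun z => V (reduce e z)).
    assert (HW : PT T (N1 + N2) W) by (apply J_open_iff; auto).
    destruct (tube2 T HT N1 N2 W (lifts e N1 u) (lifts e N2 v)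
                (fun x => length x = N1 /\ filter (is_not_e e) x = u)
                (fun y => length y = N2 /\ filter (is_not_e e) y = v) HW)
      as (O1 & O2 & A1 & A2 & A3 & A4 & A5).
    { intros x _ [Hx _]; auto. }
    { intros x y _ [Hx Fx] _ [Hy Fy]. split; auto. unfold W.
      replace (reduce e (x ++ y)) with (J_concat e (alpha t0) (beta t0)); auto.
      apply J_eq; simpl. rewrite filter_app, Fx, Fy; auto. }
    destruct (cont_loc T e alpha (Omega e N1 O1) t0 Ha) as (eps1 & He1 & Hb1).
    { apply closed_image; auto. }
    { intros x' Hx' Hf. apply A3; [apply lifts_in|]; auto. }
    destruct (cont_loc T e beta (Omega e N2 O2) t0 Hb) as (eps2 & He2 & Hb2).
    { apply closed_image; auto. }
    { intros x' Hx' Hf. apply A4; [apply lifts_in|]; auto. }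
    exists (Rmin eps1 eps2); split; [apply Rmin_glb_lt; auto|].
    intros t' Ht'.
    assert (H1 := Hb1 t' (Rlt_le_trans _ _ _ Ht' (Rmin_l _ _))).
    assert (H2 := Hb2 t' (Rlt_le_trans _ _ _ Ht' (Rmin_r _ _))).
    destruct (pad_lift e (alpha t') N1 (HN1 t')) as [L1 F1].
    destruct (pad_lift e (beta t') N2 (HN2 t')) as [L2 F2].
    pose proof (A5 _ _ (H1 _ L1 F1) (H2 _ L2 F2)) as HW'. unfold W in HW'.
    match type of HW' with V ?z => replace (J_concat e (alpha t') (beta t')) with z; auto end.
    apply J_eq; simpl. rewrite filter_app, F1, F2; auto.
Qed.
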